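(* Let $\Sigma$ be a set and let $1\le p<\infty$. Suppose $s$ is a sane scoring function on $\Sigma$ such that the distance $d$ on $\Sigma$ defined by $d(a,b)=(s(a,a)-s(a,b))^{1/p}$ is a quasi-metric on $\Sigma$, and suppose $\gamma,\delta\in\Gamma_{\mathrm{CL}}(\Sigma)$ satisfy, for all $a,b\in\Sigma$, \[\gamma(b)-\gamma(a)\le d^p(a,b)\quad\text{and}\quad s(a,a)+\delta(a)-s(b,b)-\delta(b)\le d^p(a,b).\] Let $S$ be the global similarity with respect to $s$, $\gamma$ and $\delta$, and let $\alpha(x)=\gamma(x)^{1/p}$ and $\beta(x)=(S(x,x)+\delta(x))^{1/p}$ for all $x\in\Sigma^+$. Then the $\ell^p$ edit distance $D$ on $\Sigma^*$ extending $d$, $\alpha$ and $\beta$ is a quasi-metric on $\Sigma^*$, and for all $x,y\in\Sigma^*$, \[D(x,y)=\big(S(x,x)-S(x,y)\big)^{1/p}.\]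
   Context: $\Sigma^*$ is the free monoid on $\Sigma$ (finite words, concatenation, empty word $e$), $\Sigma^+=\Sigma^*\setminus\{e\}$; for $w=w_1\cdots w_n$, $|w|=n$, $\bar w_k=w_1\cdots w_k$, $\bar w_0=e$. A quasi-metric on $X$ is a map $q:X\times X\to\mathbb{R}_{\ge0}$ with $q(x,y)=q(y,x)=0\iff x=y$ and $q(x,z)\le q(x,y)+q(y,z)$. A sane scoring function $s:X\times X\to\mathbb{R}$ satisfies $s(x,x)>0$, $s(x,x)\ge s(x,y)$, $s(x,x)\ge s(y,x)$ for all $x,y$. A gap penalty over $\Sigma^+$ is a positive function $\gamma:\Sigma^+\to\mathbb{R}$ with $\gamma(u)+\gamma(v)\ge\gamma(uv)$; $\Gamma(\Sigma)$ is the set of these. $\gamma$ is increasing if $\gamma(uxv)\ge\gamma(uv)$ for all $u,v,x\in\Sigma^*$. $\Gamma_{\mathrm{CL}}(\Sigma)$ (composition-length gap penalties) is the set of increasing $\gamma\in\Gamma(\Sigma)$ of the form $\gamma(z)=\sum_i\phi(z_i)+\psi(|z|)$ for some $\phi:\Sigma\to\mathbb{R}$, $\psi:\mathbb{N}\to\mathbb{R}$. Global similarity: $S(e,e)=0$, $S(e,\bar y_j)=-\gamma(\bar y_j)$, $S(\bar x_i,e)=-\delta(\bar x_i)$, and for $i,j\ge1$ \[S(\bar x_i,\bar y_j)=\max\Big\{S(\bar x_{i-1},\bar y_{j-1})+s(x_i,y_j),\ \max_{1\le k\le j}\{S(\bar x_i,\bar y_{j-k})-\gamma(y_{j-k+1}\cdots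 y_j)\},\ \max_{1\le k\le i}\{S(\bar x_{i-k},\bar y_j)-\delta(x_{i-k+1}\cdots x_i)\}\Big\},\] $S(x,y)=S(\bar x_{|x|},\bar y_{|y|})$. $\ell^p$ edit distance extending $d$, $\alpha$, $\beta$ (with $\alpha^p,\beta^p\in\Gamma(\Sigma)$): $D(e,e)=0$, $D(e,\bar y_j)=\alpha(\bar y_j)$, $D(\bar x_i,e)=\beta(\bar x_i)$, and for $i,j\ge1$ \[D(\bar x_i,\bar y_j)=\Big(\min\Big\{D^p(\bar x_{i-1},\bar y_{j-1})+d^p(x_i,y_j),\ \min_{1\le k\le j}\{D^p(\bar x_i,\bar y_{j-k})+\alpha^p(y_{j-k+1}\cdots y_j)\},\ \min_{1\le k\le i}\{D^p(\bar x_{i-k},\bar y_j)+\beta^p(x_{i-k+1}\cdots x_i)\}\Big\}\Big)^{1/p},\] $D(x,y)=D(\bar x_{|x|},\bar y_{|y|})$. *)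

(* Defs.v *)
From mathcomp Require Import all_boot all_order all_algebra.
From mathcomp Require Import reals exp.
Set Implicit Arguments. Unset Strict Implicit. Unset Printing Implicit Defensive.
Import Order.TTheory GRing.Theory Num.Theory.
Local Open Scope ring_scope.

Section Defs.
Variable R : realType.

Definition is_quasimetric (X : Type) (q : X -> X -> R) : Prop :=
  [/\ (forall x y, 0 <= q x y),
      (forall x y, (q x y = 0 /\ q y x = 0) <-> x = y) &
      (forall x y z, q x z <= q x y + q y z)].

Definition sane (T : Type) (s : T -> T -> R) : Prop :=
  forall x y, [/\ 0 < s x x, s x y <= s x x & s y x <= s x x].

(* gap penalties over Sigma^+ (functions on words; the value at the empty
   word is irrelevant) *)
Definition gap_penalty (T : Type) (g : seq T -> R) : Prop :=
  (forall u : seq T, u <> [::] -> 0 < g u) /\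
  (forall u v : seq T, u <> [::] -> v <> [::] -> g (u ++ v) <= g u + g v).

Definition increasing_gap (T : Type) (g : seq T -> R) : Prop :=
  forall u x v : seq T, u ++ v <> [::] -> g (u ++ v) <= g (u ++ x ++ v).

Definition gap_CL (T : Type) (g : seq T -> R) : Prop :=
  [/\ gap_penalty g, increasing_gap g &
      exists (phi : T -> R) (psi : nat -> R),
        forall z : seq T, z <> [::] -> g z = \sum_(a <- z) phi a + psi (size z)].

Fixpoint splitlast (T : Type) (s : seq T) : option (seq T * T) :=
  match s with
  | [::] => None
  | a :: s' => match splitlast s' with
               | None => Some ([::], a)
               | Some (u, b) => Some (a :: u, b)
               end
  end.

Definition maxl (a : R) (l : seq R) := foldr Num.max a l.
Definition minl (a : R) (l : seq R) := foldr Num.min a l.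

Fixpoint Sfuel (T : Type) (s : T -> T -> R) (g d : seq T -> R) (n : nat)
    (x y : seq T) : R :=
  match n with
  | 0%N => 0
  | n'.+1 =>
    match splitlast x, splitlast y with
    | None, None => 0
    | None, Some _ => - g y
    | Some _, None => - d x
    | Some (x', a), Some (y', b) =>
      maxl (Sfuel s g d n' x' y' + s a b)
        ([seq Sfuel s g d n' x (take m y) - g (drop m y) | m <- iota 0 (size y)] ++
         [seq Sfuel s g d n' (take m x) y - d (drop m x) | m <- iota 0 (size x)])
    end
  end.

Definition globalS (T : Type) (s : T -> T -> R) (g d : seq T -> R)
  (x y : seq T) : R := Sfuel s g d (size x + size y) x y.

Fixpoint Dfuel (T : Type) (p : R) (dist : T -> T -> R) (al be : seq T -> R)
    (n : nat) (x y : seq T) : R :=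
  match n with
  | 0%N => 0
  | n'.+1 =>
    match splitlast x, splitlast y with
    | None, None => 0
    | None, Some _ => al y
    | Some _, None => be x
    | Some (x', a), Some (y', b) =>
      powR (minl (powR (Dfuel p dist al be n' x' y') p + powR (dist a b) p)
        ([seq powR (Dfuel p dist al be n' x (take m y)) p
              + powR (al (drop m y)) p | m <- iota 0 (size y)] ++
         [seq powR (Dfuel p dist al be n' (take m x) y) p
              + powR (be (drop m x)) p | m <- iota 0 (size x)])) p^-1
    end
  end.

Definition lp_edit (T : Type) (p : R) (dist : T -> T -> R) (al be : seq T -> R)
  (x y : seq T) : R := Dfuel p dist al be (size x + size y) x y.

End Defs.

(* Main.v *)
Require Import Defs.
From mathcomp Require Import all_boot all_order all_algebra.
From mathcomp Require Import reals exp.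
From mathcomp Require Import classical_sets convex hoelder.
From mathcomp Require Import ring lra zify.
From Stdlib Require Import Permutation.
Import Order.TTheory GRing.Theory Num.Theory.
Local Open Scope ring_scope.
Set Implicit Arguments. Unset Strict Implicit.

Lemma key (R : realType) (p u v al be : R) : 1 <= p -> 0 < u -> 0 < v -> 0 <= al -> 0 <= be ->
  powR (al + be) p <= powR ((u+v)/u) (p-1) * powR al p + powR ((u+v)/v) (p-1) * powR be p.
Proof.
move=> p1 u0 v0 al0 be0.
have uv0 : 0 < u + v by rewrite addr_gt0.
have t0 : 0 <= u / (u + v) by rewrite divr_ge0 // ltW.
have t1 : u / (u + v) <= 1 by rewrite ler_pdivrMr // mul1r lerDl ltW.
have p0 : 0 < p by apply: lt_le_trans p1.
have H := convex_powR p1 (interval_inference.Itv01 t0 t1) (x:= al * ((u+v)/u)) (y := be * ((u+v)/v)).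
have /H {}H : al * ((u + v) / u) \in `[0, +oo[%classic.
  by rewrite inE /= in_itv /= andbT mulr_ge0 // divr_ge0 // ltW.
have /H {}H : be * ((u + v) / v) \in `[0, +oo[%classic.
  by rewrite inE /= in_itv /= andbT mulr_ge0 // divr_ge0 // ltW.
move: H; rewrite [X in powR X _]convRE /= /unstable.onem.
have -> : u / (u + v) * (al * ((u + v) / u)) + (1 - u / (u + v)) * (be * ((u + v) / v)) = al + be.
  have -> : 1 - u / (u + v) = v / (u + v) by field; rewrite lt0r_neq0.
  by field; rewrite !lt0r_neq0.
move=> /le_trans; apply.
have e : forall w, 0 < w -> w / (u + v) * powR ((u+v)/w) p = powR ((u+v)/w) (p-1).
  move=> w w0; rewrite powRB; last by apply/implyP => _; rewrite gt_eqF // divr_gt0.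
  rewrite powRr1; last by rewrite divr_ge0 // ltW.
  by rewrite invf_div mulrC.
rewrite convRE /= /unstable.onem.
have -> : 1 - u / (u + v) = v / (u + v) by field; rewrite lt0r_neq0.
have hX : 0 <= (u+v)/u by rewrite divr_ge0 // ltW.
have hY : 0 <= (u+v)/v by rewrite divr_ge0 // ltW.
rewrite (powRM _ al0 hX) (powRM _ be0 hY) mulrCA e // mulrCA e //.
by rewrite mulrC [X in _ + X <= _]mulrC.
Qed.

Definition gz0 (R : realType) (T : Type) (g : seq T -> R) (w : seq T) : R :=
  if w is [::] then 0 else g w.

Lemma gz0_nil (R : realType) (T : Type) (g : seq T -> R) : gz0 g [::] = 0.
Proof. by []. Qed.

Lemma gz0_ne (R : realType) (T : Type) (g : seq T -> R) w : w <> [::] -> gz0 g w = g w.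
Proof. by case: w. Qed.

Lemma gz0_ge0 (R : realType) (T : Type) (g : seq T -> R) w : gap_penalty g -> 0 <= gz0 g w.
Proof. by case=> pos _; case: w => [|a w] //=; apply/ltW/pos. Qed.

Lemma gz0_eq0 (R : realType) (T : Type) (g : seq T -> R) w : gap_penalty g -> gz0 g w <= 0 -> w = [::].
Proof.
case=> pos _; case: w => [|a w] //= H.
by have := pos (a :: w) ltac:(by []); rewrite ltNge H.
Qed.

Lemma gz0_cat (R : realType) (T : Type) (g : seq T -> R) u v : gap_penalty g ->
  gz0 g (u ++ v) <= gz0 g u + gz0 g v.
Proof.
case=> pos sub; case: u => [|a u]; first by rewrite /= add0r.
case: v => [|b v]; first by rewrite cats0 /= addr0.
by apply: sub.
Qed.

Lemma sum_perm (R : realType) (T : Type) (f : T -> R) (u v : seq T) :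
  Permutation u v -> \sum_(a <- u) f a = \sum_(a <- v) f a.
Proof.
elim=> //=.
- by move=> x l l' _ IH; rewrite !big_cons IH.
- by move=> x y l; rewrite !big_cons addrCA.
- by move=> l l' l'' _ -> _ ->.
Qed.

Lemma gz0_perm (R : realType) (T : Type) (g : seq T -> R) u v : gap_CL g ->
  Permutation u v -> gz0 g u = gz0 g v.
Proof.
case=> _ _ [phi [psi H]] Puv.
case: u Puv => [|a u] Puv.
  by rewrite (Permutation_nil Puv).
case: v Puv => [|b v] Puv.
  by have := Permutation_nil (Permutation_sym Puv).
rewrite /= !H //; rewrite (sum_perm phi Puv).
by have := Permutation_length Puv; rewrite /= => ->.
Qed.

Lemma gz0_catl (R : realType) (T : Type) (g : seq T -> R) u r : gap_CL g ->
  gz0 g u <= gz0 g (u ++ r).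
Proof.
case=> gp inc _; case: u => [|a u]; first by rewrite /=; apply: gz0_ge0.
have := inc (a :: u) r [::] ltac:(by rewrite cats0).
by rewrite !cats0.
Qed.

Lemma gz0_sub (R : realType) (T : Type) (g : seq T -> R) u r v : gap_CL g ->
  Permutation (u ++ r) v -> gz0 g u <= gz0 g v.
Proof.
move=> gc P; rewrite -(gz0_perm gc P); exact: gz0_catl.
Qed.

Lemma gz0_pairs (R : realType) (T P : Type) (g : seq T -> R) (f1 f2 : P -> T)
  (h : P -> R) (l : seq P) : gap_CL g ->
  (forall q, g [:: f1 q] - g [:: f2 q] <= h q) ->
  gz0 g (map f1 l) <= gz0 g (map f2 l) + \sum_(q <- l) h q.
Proof.
case=> _ _ [phi [psi H]] Hh.
case: l => [|q l]; first by rewrite /= big_nil addr0.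
rewrite /= !H //= !size_map !big_cons !big_map.
have E q' : phi (f1 q') - phi (f2 q') <= h q'.
  have := Hh q'; rewrite !H // !big_cons !big_nil !addr0 /=.
  by rewrite opprD addrACA subrr addr0.
have S1 : \sum_(j <- l) (phi (f1 j) - phi (f2 j)) <= \sum_(j <- l) h j.
  by apply: ler_sum => j _; apply: E.
rewrite sumrB in S1.
have := E q; lra.
Qed.

Definition sig (R : realType) (T : Type) (s : T -> T -> R) (x : seq T) : R :=
  \sum_(a <- x) s a a.

Lemma sig_nil (R : realType) (T : Type) (s : T -> T -> R) : sig s [::] = 0.
Proof. by rewrite /sig big_nil. Qed.

Lemma sig_cat (R : realType) (T : Type) (s : T -> T -> R) u v :
  sig s (u ++ v) = sig s u + sig s v.
Proof. by rewrite /sig big_cat. Qed.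

Lemma sig_rcons (R : realType) (T : Type) (s : T -> T -> R) u a :
  sig s (rcons u a) = sig s u + s a a.
Proof. by rewrite -cats1 sig_cat /sig big_seq1. Qed.

Lemma sig_ge0 (R : realType) (T : Type) (s : T -> T -> R) u : sane s -> 0 <= sig s u.
Proof. by move=> hs; apply: sumr_ge0 => a _; case: (hs a a) => /ltW. Qed.

Lemma bz_CL (R : realType) (T : Type) (s : T -> T -> R) (delta : seq T -> R) :
  sane s -> gap_CL delta -> gap_CL (fun w => sig s w + delta w).
Proof.
move=> hs [[dpos dsub] dinc [phi [psi H]]]; split; [split|..].
- by move=> u /dpos u0; apply: ltr_wpDl => //; apply: sig_ge0.
- move=> u v u0 v0; rewrite sig_cat.
  by have := dsub u v u0 v0; lra.
- move=> u x v uv0; rewrite !sig_cat.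
  have := dinc u x v uv0; have := sig_ge0 x hs; lra.
- exists (fun a => s a a + phi a), psi => z z0.
  by rewrite H // big_split /= addrA.
Qed.

Lemma maxl_ge_hd (R : realType) (a : R) l : a <= maxl a l.
Proof. by rewrite /maxl; elim: l => //= v l IH; rewrite le_max IH orbT. Qed.

Lemma maxl_ge (R : realType) (a : R) l v : v \in l -> v <= maxl a l.
Proof.
rewrite /maxl; elim: l => //= w l IH; rewrite inE => /orP [/eqP ->|/IH H].
  by rewrite le_max lexx.
by rewrite le_max H orbT.
Qed.

Lemma maxl_mem (R : realType) (a : R) l : maxl a l = a \/ maxl a l \in l.
Proof.
rewrite /maxl; elim: l => [|w l IH] /=; first by left.
case: (leP w (maxl a l)) => H.
- by case: IH => IH; [left | right; rewrite inE]; rewrite /maxl IH ?orbT.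
- by right; rewrite inE eqxx.
Qed.

Lemma minl_shift (R : realType) (c a : R) l :
  minl (c - a) (map (fun v => c - v) l) = c - maxl a l.
Proof.
rewrite /maxl /minl; elim: l => //= v l ->.
case: (leP v (foldr Num.max a l)) => H.
- by rewrite min_r //; lra.
- by rewrite min_l //; lra.
Qed.

Lemma splitlast_rcons (T : Type) (x : seq T) a : splitlast (rcons x a) = Some (x, a).
Proof. by elim: x => //= b x ->. Qed.

Lemma splitlast_None (T : Type) (x : seq T) : splitlast x = None -> x = [::].
Proof. by case/lastP: x => // x a; rewrite splitlast_rcons. Qed.

Lemma splitlast_Some (T : Type) (x x' : seq T) a : splitlast x = Some (x', a) -> x = rcons x' a.
Proof. by case/lastP: x => // x b; rewrite splitlast_rcons => -[-> ->]. Qed.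

Lemma maxl_le (R : realType) (a : R) l b : a <= b -> (forall v, v \in l -> v <= b) -> maxl a l <= b.
Proof.
rewrite /maxl => ab; elim: l => //= v l IH H.
rewrite ge_max H ?inE ?eqxx // IH // => w wl; apply: H; rewrite inE wl orbT //.
Qed.

Lemma Sfuel_indep (R : realType) (T : Type) (s : T -> T -> R) (g d : seq T -> R) n m x y :
  (size x + size y <= n)%N -> (size x + size y <= m)%N -> Sfuel s g d n x y = Sfuel s g d m x y.
Proof.
elim: n m x y => [|n IH] [|m] x y //=.
- case: x => //; case: y => //= _ _.
- case: x => //; case: y => //= _ _.
- move=> Hn Hm.
  case Hx: (splitlast x) => [[x' a]|]; case Hy: (splitlast y) => [[y' b]|] //.
  have sx : size x = (size x').+1 by rewrite (splitlast_Some Hx) size_rcons.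
  have sy : size y = (size y').+1 by rewrite (splitlast_Some Hy) size_rcons.
  congr maxl; first by rewrite (IH m) //; lia.
  congr (_ ++ _); apply/eq_in_map => k; rewrite mem_iota => /andP[_ Hk];
    congr (_ - _); apply: IH; rewrite ?size_takel; lia.
Qed.

Lemma Sfuel_le (R : realType) (T : Type) (s : T -> T -> R) (g d : seq T -> R) n x y :
  sane s -> gap_penalty g -> gap_penalty d -> Sfuel s g d n x y <= sig s x.
Proof.
move=> hs [gpos _] [dpos _].
elim: n x y => [|n IH] x y /=; first exact: sig_ge0.
case Hx: (splitlast x) => [[x' a]|]; case Hy: (splitlast y) => [[y' b]|].
- have Ex := splitlast_Some Hx; have Ey := splitlast_Some Hy.
  apply: maxl_le.
    rewrite Ex sig_rcons; apply: lerD; first exact: IH.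
    by case: (hs a b).
  move=> v; rewrite mem_cat => /orP[] /mapP [k]; rewrite mem_iota => /andP[_ Hk] ->.
  + have : 0 < g (drop k y).
      apply: gpos; move=> E; have := size_drop k y; rewrite E /=; lia.
    have := IH x (take k y); lra.
  + have : 0 < d (drop k x).
      apply: dpos; move=> E; have := size_drop k x; rewrite E /=; lia.
    have := sig_cat s (take k x) (drop k x); rewrite cat_take_drop => ->.
    have := IH (take k x) y; have := sig_ge0 (drop k x) hs; lra.
- have Ex := splitlast_Some Hx; have := dpos x; rewrite Ex => /(_ ltac:(by case: (x'))).
  have := sig_ge0 (rcons x' a) hs; lra.
- have Ex := splitlast_None Hx; have Ey := splitlast_Some Hy.
  have := gpos y; rewrite Ey => /(_ ltac:(by case: (y'))); rewrite Ex sig_nil; lra.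
- by apply: sig_ge0.
Qed.

Lemma S_nil_l (R : realType) (T : Type) (s : T -> T -> R) (g d : seq T -> R) y :
  y <> [::] -> globalS s g d [::] y = - g y.
Proof.
case/lastP: y => // y' b _.
by rewrite /globalS add0n size_rcons /= splitlast_rcons.
Qed.

Lemma S_nil_r (R : realType) (T : Type) (s : T -> T -> R) (g d : seq T -> R) x :
  x <> [::] -> globalS s g d x [::] = - d x.
Proof.
case/lastP: x => // x' a _.
by rewrite /globalS addn0 size_rcons /= splitlast_rcons.
Qed.

Lemma S_unfold (R : realType) (T : Type) (s : T -> T -> R) (g d : seq T -> R) x y x' a y' b :
  x = rcons x' a -> y = rcons y' b ->
  globalS s g d x y = maxl (globalS s g d x' y' + s a b)
    ([seq globalS s g d x (take m y) - g (drop m y) | m <- iota 0 (size y)] ++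
     [seq globalS s g d (take m x) y - d (drop m x) | m <- iota 0 (size x)]).
Proof.
move=> Ex Ey.
have sx : size x = (size x').+1 by rewrite Ex size_rcons.
have sy : size y = (size y').+1 by rewrite Ey size_rcons.
have Hx : splitlast x = Some (x', a) by rewrite Ex splitlast_rcons.
have Hy : splitlast y = Some (y', b) by rewrite Ey splitlast_rcons.
rewrite {1}/globalS.
have -> : (size x + size y = (size x + size y).-1.+1)%N by lia.
rewrite /= Hx Hy.
congr maxl; first by rewrite /globalS; congr (_ + _); apply: Sfuel_indep; lia.
congr (_ ++ _); apply/eq_in_map => k; rewrite mem_iota => /andP[_ Hk];
  congr (_ - _); rewrite /globalS; apply: Sfuel_indep; rewrite ?size_takel; lia.
Qed.

Lemma S_att (R : realType) (T : Type) (s : T -> T -> R) (g d : seq T -> R) x y x' a y' b :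
  x = rcons x' a -> y = rcons y' b ->
  [\/ globalS s g d x y = globalS s g d x' y' + s a b,
      exists2 m, (m < size y)%N & globalS s g d x y = globalS s g d x (take m y) - g (drop m y) |
      exists2 m, (m < size x)%N & globalS s g d x y = globalS s g d (take m x) y - d (drop m x)].
Proof.
move=> Ex Ey; rewrite (S_unfold s g d Ex Ey).
set l := (_ ++ _).
case: (maxl_mem (globalS s g d x' y' + s a b) l) => [->|]; first by constructor 1.
rewrite -(S_unfold s g d Ex Ey) mem_cat => /orP[] /mapP [k]; rewrite mem_iota => /andP[_ Hk] ->.
- by constructor 2; exists k.
- by constructor 3; exists k.
Qed.

Lemma S_match (R : realType) (T : Type) (s : T -> T -> R) (g d : seq T -> R) x' a y' b :
  globalS s g d x' y' + s a b <= globalS s g d (rcons x' a) (rcons y' b).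
Proof. rewrite (S_unfold s g d (erefl _) (erefl _)); exact: maxl_ge_hd. Qed.

Lemma S_ins (R : realType) (T : Type) (s : T -> T -> R) (g d : seq T -> R) x w I :
  gap_penalty g -> I <> [::] ->
  globalS s g d x w - g I <= globalS s g d x (w ++ I).
Proof.
move=> [gpos gsub] I0.
case/lastP: x => [|x' a].
  case: w => [|c w].
    by rewrite /= (S_nil_l _ _ _ I0); have -> : globalS s g d [::] [::] = 0 by []; lra.
  rewrite !S_nil_l //; have := gsub (c :: w) I ltac:(by []) I0; lra.
case/lastP: I I0 => // I' b _.
rewrite (S_unfold s g d (erefl _) (esym (rcons_cat b w I'))).
apply: maxl_ge; rewrite mem_cat; apply/orP; left.
apply/mapP; exists (size w).
  by rewrite mem_iota size_cat size_rcons; lia.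
by rewrite take_size_cat // drop_size_cat.
Qed.

Lemma S_del (R : realType) (T : Type) (s : T -> T -> R) (g d : seq T -> R) u w D :
  gap_penalty d -> D <> [::] ->
  globalS s g d u w - d D <= globalS s g d (u ++ D) w.
Proof.
move=> [dpos dsub] D0.
case/lastP: w => [|w' b].
  case: u => [|c u].
    by rewrite /= (S_nil_r _ _ _ D0); have -> : globalS s g d [::] [::] = 0 by []; lra.
  rewrite !S_nil_r //; have := dsub (c :: u) D ltac:(by []) D0; lra.
case/lastP: D D0 => // D' a _.
rewrite (S_unfold s g d (esym (rcons_cat a u D')) (erefl _)).
apply: maxl_ge; rewrite mem_cat; apply/orP; right.
apply/mapP; exists (size u).
  by rewrite mem_iota size_cat size_rcons; lia.
by rewrite take_size_cat // drop_size_cat.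
Qed.

Lemma S_diag (R : realType) (T : Type) (s : T -> T -> R) (g d : seq T -> R) x :
  sane s -> gap_penalty g -> gap_penalty d -> globalS s g d x x = sig s x.
Proof.
move=> hs hg hd; apply/le_anti/andP; split; first exact: Sfuel_le.
elim/last_ind: x => [|x a IH]; first by rewrite sig_nil.
rewrite sig_rcons; apply: le_trans (S_match _ _ _ _ _ _ _); lra.
Qed.

Lemma powRK (R : realType) (p e : R) : 0 < p -> 0 <= e -> powR (powR e p^-1) p = e.
Proof. by move=> p0 e0; rewrite -powRrM mulVf ?gt_eqF // powRr1. Qed.

Lemma powR0p (R : realType) (p : R) : 0 < p -> powR 0 p^-1 = 0.
Proof. by move=> p0; rewrite powR0 // invr_eq0 gt_eqF. Qed.

Lemma D_formula (R : realType) (T : Type) (p : R) (s : T -> T -> R) (gamma delta : seq T -> R) n x y :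
  0 < p -> sane s -> gap_penalty gamma -> gap_penalty delta ->
  (size x + size y <= n)%N ->
  Dfuel p (fun a b => powR (s a a - s a b) p^-1) (fun w => powR (gamma w) p^-1)
    (fun w => powR (globalS s gamma delta w w + delta w) p^-1) n x y
  = powR (sig s x - Sfuel s gamma delta n x y) p^-1.
Proof.
move=> p0 hs hg hd; have [gpos _] := hg; have [dpos _] := hd.
elim: n x y => [|n IH] x y.
  by case: x => //; case: y => // _; rewrite /= sig_nil subr0 powR0p.
move=> Hn /=.
case Hx: (splitlast x) => [[x' a]|]; case Hy: (splitlast y) => [[y' b]|].
- have Ex := splitlast_Some Hx; have Ey := splitlast_Some Hy.
  have sx : size x = (size x').+1 by rewrite Ex size_rcons.
  have sy : size y = (size y').+1 by rewrite Ey size_rcons.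
  congr powR; rewrite -minl_shift; congr minl.
    rewrite IH; last by lia.
    have := Sfuel_le n x' y' hs hg hd; case: (hs a b) => _ Hab _ Hs.
    by rewrite !powRK //; [rewrite Ex sig_rcons; ring | lra | lra].
  rewrite map_cat -!map_comp; congr (_ ++ _); apply/eq_in_map => k;
    rewrite mem_iota => /andP[_ Hk] /=.
  + rewrite IH; last by rewrite size_takel; lia.
    have g0 : 0 < gamma (drop k y).
      apply: gpos; move=> E; have := size_drop k y; rewrite E /=; lia.
    have := Sfuel_le n x (take k y) hs hg hd => Hs.
    by rewrite !powRK //; try ring; lra.
  + rewrite IH; last by rewrite size_takel; lia.
    have d0 : 0 < delta (drop k x).
      apply: dpos; move=> E; have := size_drop k x; rewrite E /=; lia.
    rewrite S_diag //.
    have := sig_cat s (take k x) (drop k x); rewrite cat_take_drop => ->.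
    have := Sfuel_le n (take k x) y hs hg hd => Hs.
    have := sig_ge0 (drop k x) hs => Hs2.
    by rewrite !powRK //; try ring; lra.
- rewrite /= S_diag //; congr powR; ring.
- rewrite (splitlast_None Hx) /= sig_nil; congr powR; ring.
- by rewrite (splitlast_None Hx) sig_nil subr0 powR0p.
Qed.

Inductive col (T : Type) := CM of T & T | CD of T | CI of T.

Fixpoint src (T : Type) (c : seq (col T)) : seq T :=
  match c with
  | [::] => [::]
  | CM a _ :: c' => a :: src c'
  | CD a :: c' => a :: src c'
  | CI _ :: c' => src c'
  end.

Fixpoint tgt (T : Type) (c : seq (col T)) : seq T :=
  match c with
  | [::] => [::]
  | CM _ b :: c' => b :: tgt c'
  | CD _ :: c' => tgt c'
  | CI b :: c' => b :: tgt c'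
  end.

Fixpoint dels (T : Type) (c : seq (col T)) : seq T :=
  match c with
  | [::] => [::]
  | CD a :: c' => a :: dels c'
  | _ :: c' => dels c'
  end.

Fixpoint ins (T : Type) (c : seq (col T)) : seq T :=
  match c with
  | [::] => [::]
  | CI a :: c' => a :: ins c'
  | _ :: c' => ins c'
  end.

Fixpoint mp (T : Type) (c : seq (col T)) : seq (T * T) :=
  match c with
  | [::] => [::]
  | CM a b :: c' => (a, b) :: mp c'
  | _ :: c' => mp c'
  end.

Fixpoint rc (R : realType) (T : Type) (bz gz : seq T -> R) (dp : T -> T -> R)
   (c : seq (col T)) (D I : seq T) : R :=
  match c with
  | [::] => bz D + gz I
  | CM a b :: c' => bz D + gz I + dp a b + rc bz gz dp c' [::] [::]
  | CD a :: c' => rc bz gz dp c' (rcons D a) I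
  | CI b :: c' => rc bz gz dp c' D (rcons I b)
  end.

Lemma src_cat (T : Type) (c1 c2 : seq (col T)) : src (c1 ++ c2) = src c1 ++ src c2.
Proof. by elim: c1 => //= [[a b|a|b]] c1 ->. Qed.

Lemma tgt_cat (T : Type) (c1 c2 : seq (col T)) : tgt (c1 ++ c2) = tgt c1 ++ tgt c2.
Proof. by elim: c1 => //= [[a b|a|b]] c1 ->. Qed.

Lemma src_mapCI (T : Type) (w : seq T) : src (map (@CI T) w) = [::].
Proof. by elim: w. Qed.
Lemma tgt_mapCI (T : Type) (w : seq T) : tgt (map (@CI T) w) = w.
Proof. by elim: w => //= a w ->. Qed.
Lemma src_mapCD (T : Type) (w : seq T) : src (map (@CD T) w) = w.
Proof. by elim: w => //= a w ->. Qed.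
Lemma tgt_mapCD (T : Type) (w : seq T) : tgt (map (@CD T) w) = [::].
Proof. by elim: w. Qed.

Lemma src_perm (T : Type) (c : seq (col T)) : Permutation (src c) (dels c ++ map fst (mp c)).
Proof.
elim: c => //= [[a b|a|b]] c IH //=.
- by apply: Permutation_cons_app.
- by apply: perm_skip.
Qed.

Lemma tgt_perm (T : Type) (c : seq (col T)) : Permutation (tgt c) (ins c ++ map snd (mp c)).
Proof.
elim: c => //= [[a b|a|b]] c IH //=.
- by apply: Permutation_cons_app.
- by apply: perm_skip.
Qed.

Definition gapfun (R : realType) (T : Type) (f : seq T -> R) :=
  [/\ f [::] = 0, (forall w, 0 <= f w) & (forall u v, f (u ++ v) <= f u + f v)].

Lemma gz0_gapfun (R : realType) (T : Type) (g : seq T -> R) : gap_penalty g -> gapfun (gz0 g).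
Proof.
move=> hg; split => //; first by move=> w; apply: gz0_ge0.
by move=> u v; apply: gz0_cat.
Qed.

Lemma rc_ge0 (R : realType) (T : Type) (bz gz : seq T -> R) (dp : T -> T -> R) c D I :
  gapfun bz -> gapfun gz -> (forall a b, 0 <= dp a b) -> 0 <= rc bz gz dp c D I.
Proof.
move=> [_ b0 _] [_ g0 _] d0.
elim: c D I => [|[a b|a|b] c IH] D I /=.
- by rewrite addr_ge0.
- by rewrite !addr_ge0.
- exact: IH.
- exact: IH.
Qed.

Lemma rc_cat_CM (R : realType) (T : Type) (bz gz : seq T -> R) (dp : T -> T -> R) c a b r D I :
  rc bz gz dp (c ++ CM a b :: r) D I = rc bz gz dp c D I + dp a b + rc bz gz dp r [::] [::].
Proof.
elim: c D I => [|[a' b'|a'|b'] c IH] D I //=.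
by rewrite IH; ring.
Qed.

Lemma rc_mapCI (R : realType) (T : Type) (bz gz : seq T -> R) (dp : T -> T -> R) w D I :
  rc bz gz dp (map (@CI T) w) D I = bz D + gz (I ++ w).
Proof.
elim: w I => [|b w IH] I /=; first by rewrite cats0.
by rewrite IH cat_rcons.
Qed.

Lemma rc_mapCD (R : realType) (T : Type) (bz gz : seq T -> R) (dp : T -> T -> R) w D I :
  rc bz gz dp (map (@CD T) w) D I = bz (D ++ w) + gz I.
Proof.
elim: w D => [|b w IH] D /=; first by rewrite cats0.
by rewrite IH cat_rcons.
Qed.

Lemma rc_cat_CI (R : realType) (T : Type) (bz gz : seq T -> R) (dp : T -> T -> R) c w D I :
  gapfun bz -> gapfun gz ->
  rc bz gz dp (c ++ map (@CI T) w) D I <= rc bz gz dp c D I + gz w.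
Proof.
move=> [_ _ bs] [_ _ gs].
elim: c D I => [|[a' b'|a'|b'] c IH] D I /=.
- rewrite rc_mapCI; have := gs I w; lra.
- have := IH [::] [::]; lra.
- exact: IH.
- exact: IH.
Qed.

Lemma rc_cat_CD (R : realType) (T : Type) (bz gz : seq T -> R) (dp : T -> T -> R) c w D I :
  gapfun bz -> gapfun gz ->
  rc bz gz dp (c ++ map (@CD T) w) D I <= rc bz gz dp c D I + bz w.
Proof.
move=> [_ _ bs] [_ _ gs].
elim: c D I => [|[a' b'|a'|b'] c IH] D I /=.
- rewrite rc_mapCD; have := bs D w; lra.
- have := IH [::] [::]; lra.
- exact: IH.
- exact: IH.
Qed.

Lemma rc_lower (R : realType) (T : Type) (bz gz : seq T -> R) (dp : T -> T -> R) c D I :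
  gapfun bz -> gapfun gz ->
  \sum_(q <- mp c) dp q.1 q.2 + bz (D ++ dels c) + gz (I ++ ins c) <= rc bz gz dp c D I.
Proof.
move=> [bnil _ bs] [gnil _ gs].
elim: c D I => [|[a b|a|b] c IH] D I /=.
- by rewrite big_nil !cats0 add0r.
- rewrite big_cons /=; have := IH [::] [::]; rewrite /= => H.
  have := bs D (dels c); have := gs I (ins c); lra.
- by rewrite -cat_rcons; apply: IH.
- by rewrite -cat_rcons; apply: IH.
Qed.

Fixpoint allZ (R : realType) (T : Type) (dp : T -> T -> R) (c : seq (col T)) : Prop :=
  match c with
  | [::] => True
  | CM a b :: c' => dp a b = 0 /\ allZ dp c'
  | _ => False
  end.

Fixpoint Zrel (R : realType) (T : Type) (dp : T -> T -> R) (x y : seq T) : Prop :=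
  match x, y with
  | [::], [::] => True
  | a :: x', b :: y' => dp a b = 0 /\ Zrel dp x' y'
  | _, _ => False
  end.

Lemma allZ_In (R : realType) (T : Type) (dp : T -> T -> R) c a b :
  allZ dp c -> List.In (CM a b) c -> dp a b = 0.
Proof.
elim: c => //= [[a' b'|a'|b']] c IH //= [H1 H2] [[<- <-]|] //.
exact: IH.
Qed.

Lemma allZ_Zrel (R : realType) (T : Type) (dp : T -> T -> R) c :
  allZ dp c -> Zrel dp (src c) (tgt c).
Proof. by elim: c => //= [[a' b'|a'|b']] c IH //= [H1 H2]; split => //; apply: IH. Qed.

Lemma rc_zero (R : realType) (T : Type) (bz gz : seq T -> R) (dp : T -> T -> R) c D I :
  gapfun bz -> gapfun gz -> (forall a b, 0 <= dp a b) ->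
  (forall w, bz w <= 0 -> w = [::]) -> (forall w, gz w <= 0 -> w = [::]) ->
  rc bz gz dp c D I <= 0 -> [/\ D = [::], I = [::] & allZ dp c].
Proof.
move=> hb hg hd bpos gpos.
have [_ b0 _] := hb; have [_ g0 _] := hg.
elim: c D I => [|[a b|a|b] c IH] D I /=.
- move=> H; have := b0 D; have := g0 I => H1 H2.
  by split => //; [apply: bpos | apply: gpos]; lra.
- move=> H; have := rc_ge0 c [::] [::] hb hg hd => H0.
  have := b0 D; have := g0 I; have := hd a b => H1 H2 H3.
  have [_ _ Hc] := IH [::] [::] ltac:(lra).
  by split; [apply: bpos | apply: gpos | split => //]; lra.
- by case/IH; case: (D).
- by case/IH => _; case: (I).
Qed.

Lemma Zrel_eq (R : realType) (T : Type) (dp : T -> T -> R) x y :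
  (forall a b, dp a b = 0 -> dp b a = 0 -> a = b) ->
  Zrel dp x y -> Zrel dp y x -> x = y.
Proof.
move=> H; elim: x y => [|a x IH] [|b y] //= [H1 H2] [H3 H4].
by rewrite (H a b H1 H3) (IH y H2 H4).
Qed.

Definition bzf (R : realType) (T : Type) (s : T -> T -> R) (d : seq T -> R) :=
  gz0 (fun w => sig s w + d w).
Definition dpf (R : realType) (T : Type) (s : T -> T -> R) := fun a b : T => s a a - s a b.
Definition Ef (R : realType) (T : Type) (s : T -> T -> R) (g d : seq T -> R) x y :=
  sig s x - globalS s g d x y.

Lemma Ef_ge0 (R : realType) (T : Type) (s : T -> T -> R) (g d : seq T -> R) x y :
  sane s -> gap_penalty g -> gap_penalty d -> 0 <= Ef s g d x y.
Proof. by move=> hs hg hd; rewrite /Ef subr_ge0; apply: Sfuel_le. Qed.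

Lemma Ef_match (R : realType) (T : Type) (s : T -> T -> R) (g d : seq T -> R) x a y b :
  Ef s g d (rcons x a) (rcons y b) <= Ef s g d x y + dpf s a b.
Proof. rewrite /Ef /dpf sig_rcons; have := S_match s g d x a y b; lra. Qed.

Lemma Ef_ins (R : realType) (T : Type) (s : T -> T -> R) (g d : seq T -> R) x w I :
  gap_penalty g -> Ef s g d x (w ++ I) <= Ef s g d x w + gz0 g I.
Proof.
move=> hg; case: I => [|b I]; first by rewrite cats0 /= addr0.
rewrite /Ef /=; have := @S_ins R T s g d x w (b :: I) hg ltac:(by []); lra.
Qed.

Lemma Ef_del (R : realType) (T : Type) (s : T -> T -> R) (g d : seq T -> R) u w D :
  gap_penalty d -> Ef s g d (u ++ D) w <= Ef s g d u w + bzf s d D.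
Proof.
move=> hd; case: D => [|a D]; first by rewrite cats0 /= addr0.
rewrite /Ef /bzf /= sig_cat; have := @S_del R T s g d u w (a :: D) hd ltac:(by []); lra.
Qed.

Lemma bzf_gapfun (R : realType) (T : Type) (s : T -> T -> R) (d : seq T -> R) :
  sane s -> gap_CL d -> gapfun (bzf s d).
Proof. by move=> hs hd; apply: gz0_gapfun; case: (bz_CL hs hd). Qed.

Lemma Ele (R : realType) (T : Type) (s : T -> T -> R) (g d : seq T -> R) c u v D I :
  gap_penalty g -> gap_penalty d ->
  Ef s g d (u ++ D ++ src c) (v ++ I ++ tgt c) <= Ef s g d u v + rc (bzf s d) (gz0 g) (dpf s) c D I.
Proof.
move=> hg hd.
elim: c u v D I => [|[a b|a|b] c IH] u v D I /=.
- rewrite !cats0.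
  have := Ef_del s g u (v ++ I) D hd; have := Ef_ins s d u v I hg; lra.
- have := IH (rcons (u ++ D) a) (rcons (v ++ I) b) [::] [::].
  rewrite /= !cat_rcons !catA => H; apply: le_trans H _.
  have := Ef_match s g d (u ++ D) a (v ++ I) b.
  have := Ef_del s g u (v ++ I) D hd; have := Ef_ins s d u v I hg; lra.
- by have := IH u v (rcons D a) I; rewrite cat_rcons.
- by have := IH u v D (rcons I b); rewrite cat_rcons.
Qed.

Lemma Eopt (R : realType) (T : Type) (s : T -> T -> R) (g d : seq T -> R) n x y :
  sane s -> gap_penalty g -> gap_CL d -> (size x + size y <= n)%N ->
  exists c, [/\ src c = x, tgt c = y & rc (bzf s d) (gz0 g) (dpf s) c [::] [::] <= Ef s g d x y].
Proof.
move=> hs hg hdc; have hd : gap_penalty d by case: hdc.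
have hb := bzf_gapfun hs hdc; have hgz := gz0_gapfun hg.
elim: n x y => [|n IH] x y Hn.
  case: x Hn => // ; case: y => // _; exists [::]; split => //=.
  by rewrite /Ef /bzf /= sig_nil; have -> : globalS s g d [::] [::] = 0 by []; lra.
case/lastP: x Hn => [|x' a] Hn.
  case/lastP: y Hn => [|y' b] Hn.
    exists [::]; split => //=.
    by rewrite /Ef /bzf /= sig_nil; have -> : globalS s g d [::] [::] = 0 by []; lra.
  exists (map (@CI T) (rcons y' b)); split; rewrite ?src_mapCI ?tgt_mapCI //.
  rewrite rc_mapCI /Ef sig_nil S_nil_l; last by case: (y').
  by rewrite /bzf /= add0r; case: (y') => [|? ?] /=; lra.
case/lastP: y Hn => [|y' b] Hn.
  exists (map (@CD T) (rcons x' a)); split; rewrite ?src_mapCD ?tgt_mapCD //.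
  rewrite rc_mapCD /Ef S_nil_r; last by case: (x').
  by rewrite /bzf /= addr0; case: (x') => [|? ?] /=; lra.
have sx := size_rcons x' a; have sy := size_rcons y' b.
case: (S_att s g d (erefl (rcons x' a)) (erefl (rcons y' b))).
- move=> E; have [c [Hs Ht Hc]] := IH x' y' ltac:(lia).
  exists (c ++ [:: CM a b]); split; [by rewrite src_cat Hs cats1 | by rewrite tgt_cat Ht cats1 |].
  rewrite rc_cat_CM /= /Ef E sig_rcons.
  rewrite addr0.
  by move: Hc; rewrite /Ef /dpf; lra.
- move=> [m Hm E].
  have [c [Hs Ht Hc]] := IH (rcons x' a) (take m (rcons y' b)) ltac:(rewrite size_takel; lia).
  exists (c ++ map (@CI T) (drop m (rcons y' b))); split;
    rewrite ?src_cat ?tgt_cat ?Hs ?Ht ?src_mapCI ?tgt_mapCI ?cats0 ?cat_take_drop //.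
  apply: le_trans; first by apply: rc_cat_CI => //.
  rewrite /Ef E gz0_ne; last first.
    move=> E0; have := size_drop m (rcons y' b); rewrite E0 /=; lia.
  by move: Hc; rewrite /Ef; lra.
- move=> [m Hm E].
  have [c [Hs Ht Hc]] := IH (take m (rcons x' a)) (rcons y' b) ltac:(rewrite size_takel; lia).
  exists (c ++ map (@CD T) (drop m (rcons x' a))); split;
    rewrite ?src_cat ?tgt_cat ?Hs ?Ht ?src_mapCD ?tgt_mapCD ?cats0 ?cat_take_drop //.
  apply: le_trans; first by apply: rc_cat_CD => //.
  rewrite /Ef E /bzf gz0_ne; last first.
    move=> E0; have := size_drop m (rcons x' a); rewrite E0 /=; lia.
  have := sig_cat s (take m (rcons x' a)) (drop m (rcons x' a)); rewrite cat_take_drop => ->.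
  by move: Hc; rewrite /Ef; lra.
Qed.

Inductive NT (T : Type) : seq (col T) -> seq (col T) -> Prop :=
  | NT_nil : NT [::] [::]
  | NT_D a g1 g2 : NT g1 g2 -> NT (CD a :: g1) g2
  | NT_I c g1 g2 : NT g1 g2 -> NT g1 (CI c :: g2)
  | NT_MD a b g1 g2 : NT g1 g2 -> NT (CM a b :: g1) (CD b :: g2)
  | NT_IM b c g1 g2 : NT g1 g2 -> NT (CI b :: g1) (CM b c :: g2)
  | NT_ID b g1 g2 : NT g1 g2 -> NT (CI b :: g1) (CD b :: g2).

Lemma NT_tgt (T : Type) (g1 g2 : seq (col T)) : NT g1 g2 -> tgt g1 = src g2.
Proof. by elim=> //= *; congr (_ :: _). Qed.

Lemma NT_N1 (T : Type) (g1 g2 : seq (col T)) : NT g1 g2 ->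
  exists r, Permutation (map snd (mp g1) ++ r) (dels g2).
Proof.
elim=> [|a g1' g2' _ [r Hr]|c g1' g2' _ [r Hr]|a b g1' g2' _ [r Hr]|b c g1' g2' _ [r Hr]|b g1' g2' _ [r Hr]] /=.
- by exists [::].
- by exists r.
- by exists r.
- by exists r; apply: perm_skip.
- by exists r.
- exists (b :: r).
  apply: Permutation_trans (Permutation_sym (Permutation_middle _ _ _)) _.
  exact: perm_skip.
Qed.

Lemma NT_N2 (T : Type) (g1 g2 : seq (col T)) : NT g1 g2 ->
  exists r, Permutation (map fst (mp g2) ++ r) (ins g1).
Proof.
elim=> [|a g1' g2' _ [r Hr]|c g1' g2' _ [r Hr]|a b g1' g2' _ [r Hr]|b c g1' g2' _ [r Hr]|b g1' g2' _ [r Hr]] /=.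
- by exists [::].
- by exists r.
- by exists r.
- by exists r.
- by exists r; apply: perm_skip.
- exists (b :: r).
  apply: Permutation_trans (Permutation_sym (Permutation_middle _ _ _)) _.
  exact: perm_skip.
Qed.

Lemma Decomp (T : Type) n (c1 c2 : seq (col T)) :
  (size c1 + size c2 <= n)%N -> tgt c1 = src c2 ->
  NT c1 c2 \/ exists g1 g2 a b c r1 r2,
    [/\ c1 = g1 ++ CM a b :: r1, c2 = g2 ++ CM b c :: r2 & NT g1 g2].
Proof.
elim: n c1 c2 => [|n IH] c1 c2.
  by case: c1 => //; case: c2 => // _ _; left; constructor.
move=> Hn Ht.
have wrapD : forall a c1', c1 = CD a :: c1' -> NT c1' c2 \/ (exists g1 g2 a b c r1 r2,
    [/\ c1' = g1 ++ CM a b :: r1, c2 = g2 ++ CM b c :: r2 & NT g1 g2]) ->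
    NT c1 c2 \/ (exists g1 g2 a b c r1 r2,
    [/\ c1 = g1 ++ CM a b :: r1, c2 = g2 ++ CM b c :: r2 & NT g1 g2]).
  move=> a c1' -> [H|[g1 [g2 [a' [b' [c' [r1 [r2 [E1 E2 H]]]]]]]]]; first by left; constructor.
  by right; exists (CD a :: g1), g2, a', b', c', r1, r2; rewrite E1 E2; split => //; constructor.
have wrapI : forall c c2', c2 = CI c :: c2' -> NT c1 c2' \/ (exists g1 g2 a b c r1 r2,
    [/\ c1 = g1 ++ CM a b :: r1, c2' = g2 ++ CM b c :: r2 & NT g1 g2]) ->
    NT c1 c2 \/ (exists g1 g2 a b c r1 r2,
    [/\ c1 = g1 ++ CM a b :: r1, c2 = g2 ++ CM b c :: r2 & NT g1 g2]).
  move=> c c2' -> [H|[g1 [g2 [a' [b' [c' [r1 [r2 [E1 E2 H]]]]]]]]]; first by left; constructor.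
  by right; exists g1, (CI c :: g2), a', b', c', r1, r2; rewrite E1 E2; split => //; constructor.
case E1: c1 Hn Ht => [|[a b|a|b] c1'] Hn Ht.
- case E2: c2 Hn Ht => [|[b' c|b'|c] c2'] Hn Ht //.
  + by left; constructor.
  + have := wrapI c c2' E2; rewrite E1 E2; apply; apply: IH => //; move: Hn => /=; lia.
- case E2: c2 Hn Ht => [|[b' c|b'|c] c2'] Hn Ht //=.
  + move: Ht => /= [<-] _; right; exists [::], [::], a, b, c, c1', c2'; split => //; constructor.
  + move: Ht => /= [<- Ht]; have [H|[g1 [g2 [a0 [b0 [c0 [r1 [r2 [F1 F2 H]]]]]]]]] := IH c1' c2' ltac:(move: Hn => /=; lia) Ht.
      by left; constructor.
    by right; exists (CM a b :: g1), (CD b :: g2), a0, b0, c0, r1, r2; rewrite F1 F2; split => //; constructor.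
  + have := wrapI c c2' E2; rewrite E1 E2; apply; apply: IH => //; move: Hn => /=; lia.
- have := wrapD a c1' E1; rewrite E1; apply; apply: IH => //; move: Hn => /=; lia.
- case E2: c2 Hn Ht => [|[b' c|b'|c] c2'] Hn Ht //=.
  + move: Ht => /= [<- Ht]; have [H|[g1 [g2 [a0 [b0 [c0 [r1 [r2 [F1 F2 H]]]]]]]]] := IH c1' c2' ltac:(move: Hn => /=; lia) Ht.
      by left; constructor.
    by right; exists (CI b :: g1), (CM b c :: g2), a0, b0, c0, r1, r2; rewrite F1 F2; split => //; constructor.
  + move: Ht => /= [<- Ht]; have [H|[g1 [g2 [a0 [b0 [c0 [r1 [r2 [F1 F2 H]]]]]]]]] := IH c1' c2' ltac:(move: Hn => /=; lia) Ht.
      by left; constructor.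
    by right; exists (CI b :: g1), (CD b :: g2), a0, b0, c0, r1, r2; rewrite F1 F2; split => //; constructor.
  + have := wrapI c c2' E2; rewrite E1 E2; apply; apply: IH => //; move: Hn => /=; lia.
Qed.

Lemma region (R : realType) (T : Type) (s : T -> T -> R) (g d : seq T -> R) g1 g2 :
  sane s -> gap_CL g -> gap_CL d ->
  (forall a b, s a a + d [:: a] - s b b - d [:: b] <= dpf s a b) ->
  (forall a b, g [:: b] - g [:: a] <= dpf s a b) ->
  NT g1 g2 ->
  bzf s d (src g1) + gz0 g (tgt g2) <=
    rc (bzf s d) (gz0 g) (dpf s) g1 [::] [::] + rc (bzf s d) (gz0 g) (dpf s) g2 [::] [::].
Proof.
move=> hs hgc hdc Hb Hg Hnt.
have hbc := bz_CL hs hdc.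
have hb := bzf_gapfun hs hdc.
have hg : gap_penalty g by case: hgc.
have hgz := gz0_gapfun hg.
have [r1 P1] := NT_N1 Hnt; have [r2 P2] := NT_N2 Hnt.
have L1 := rc_lower (dpf s) g1 [::] [::] hb hgz.
have L2 := rc_lower (dpf s) g2 [::] [::] hb hgz.
rewrite /= in L1 L2.
have B1 : bzf s d (src g1) <= bzf s d (dels g1) + bzf s d (map fst (mp g1)).
  rewrite /bzf (gz0_perm hbc (src_perm g1)); apply: gz0_cat; by case: hbc.
have B2 : bzf s d (map fst (mp g1)) <= bzf s d (map snd (mp g1)) + \sum_(q <- mp g1) dpf s q.1 q.2.
  apply: (gz0_pairs (f1:=fst) (f2:=snd) (h:=fun q => dpf s q.1 q.2) (mp g1) hbc) => q.
  by have := Hb q.1 q.2; rewrite /sig !big_seq1; lra.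
have B3 : bzf s d (map snd (mp g1)) <= bzf s d (dels g2) by apply: gz0_sub hbc P1.
have G1 : gz0 g (tgt g2) <= gz0 g (ins g2) + gz0 g (map snd (mp g2)).
  rewrite (gz0_perm hgc (tgt_perm g2)); exact: gz0_cat.
have G2 : gz0 g (map snd (mp g2)) <= gz0 g (map fst (mp g2)) + \sum_(q <- mp g2) dpf s q.1 q.2.
  apply: (gz0_pairs (f1:=snd) (f2:=fst) (h:=fun q => dpf s q.1 q.2) (mp g2) hgc) => q; exact: Hg.
have G3 : gz0 g (map fst (mp g2)) <= gz0 g (ins g1) by apply: gz0_sub hgc P2.
lra.
Qed.

Lemma In_catr (T : Type) (x : T) (s1 s2 : seq T) : List.In x s2 -> List.In x (s1 ++ s2).
Proof. by elim: s1 => //= a s1 IH H; right; apply: IH. Qed.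

Lemma In_catl (T : Type) (x : T) (s1 s2 : seq T) : List.In x s1 -> List.In x (s1 ++ s2).
Proof. by elim: s1 => //= a s1 IH [->|H]; [left | right; apply: IH]. Qed.

Lemma cat_cancel (T : Type) (u v w : seq T) : u ++ v = u ++ w -> v = w.
Proof. by elim: u => //= a u IH [] /IH. Qed.

Lemma Ef_concat (R : realType) (T : Type) (s : T -> T -> R) (g d : seq T -> R) x1 a x2 z1 c z2 :
  sane s -> gap_penalty g -> gap_CL d ->
  Ef s g d (x1 ++ a :: x2) (z1 ++ c :: z2) <= Ef s g d x1 z1 + dpf s a c + Ef s g d x2 z2.
Proof.
move=> hs hg hdc; have hd : gap_penalty d by case: hdc.
have [c1 [S1 T1 H1]] := Eopt hs hg hdc (leqnn (size x1 + size z1)).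
have [c2 [S2 T2 H2]] := Eopt hs hg hdc (leqnn (size x2 + size z2)).
have := Ele s (c1 ++ CM a c :: c2) [::] [::] [::] [::] hg hd.
rewrite /= src_cat tgt_cat /= S1 T1 S2 T2 rc_cat_CM.
have -> : Ef s g d [::] [::] = 0 by rewrite /Ef sig_nil; have -> : globalS s g d [::] [::] = 0 by []; rewrite subr0.
lra.
Qed.

Lemma le_mulA (R : realType) (A x : R) : 1 <= A -> 0 <= x -> x <= A * x.
Proof. by move=> A1 x0; nra. Qed.

Lemma Tri (R : realType) (T : Type) (s : T -> T -> R) (g d : seq T -> R) (A B : R) n c1 c2 :
  sane s -> gap_CL g -> gap_CL d ->
  (forall a b, s a a + d [:: a] - s b b - d [:: b] <= dpf s a b) ->
  (forall a b, g [:: b] - g [:: a] <= dpf s a b) ->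
  1 <= A -> 1 <= B ->
  (size c1 + size c2 <= n)%N -> tgt c1 = src c2 ->
  (forall a b c, List.In (CM a b) c1 -> List.In (CM b c) c2 -> dpf s a c <= A * dpf s a b + B * dpf s b c) ->
  Ef s g d (src c1) (tgt c2) <=
    A * rc (bzf s d) (gz0 g) (dpf s) c1 [::] [::] + B * rc (bzf s d) (gz0 g) (dpf s) c2 [::] [::].
Proof.
move=> hs hgc hdc Hb Hg A1 B1.
have hg : gap_penalty g by case: hgc.
have hd : gap_penalty d by case: hdc.
have hb := bzf_gapfun hs hdc.
have hgz := gz0_gapfun hg.
have dp0 : forall a b, 0 <= dpf s a b by move=> a b; rewrite /dpf subr_ge0; case: (hs a b).
have E0 : forall x z, Ef s g d x z <= bzf s d x + gz0 g z.
  move=> x z; have := Ele s [::] [::] [::] x z hg hd.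
  rewrite /= !cats0.
  have -> : Ef s g d [::] [::] = 0 by rewrite /Ef sig_nil; have -> : globalS s g d [::] [::] = 0 by []; rewrite subr0.
  lra.
elim: n c1 c2 => [|n IH] c1 c2 Hn Ht Hp.
  case: c1 Hn Ht Hp => //; case: c2 => // _ _ _ /=.
  rewrite /Ef sig_nil; have -> : globalS s g d [::] [::] = 0 by [].
  by rewrite !addr0 !mulr0 addr0 subr0.
have [H|[g1 [g2 [a [b [c [r1 [r2 [F1 F2 H]]]]]]]]] := Decomp Hn Ht.
  apply: le_trans (E0 _ _) _; apply: le_trans (region hs hgc hdc Hb Hg H) _.
  have := le_mulA A1 (rc_ge0 c1 [::] [::] hb hgz dp0).
  have := le_mulA B1 (rc_ge0 c2 [::] [::] hb hgz dp0); lra.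
rewrite F1 F2 src_cat tgt_cat /=.
apply: le_trans (Ef_concat _ _ _ _ _ _ hs hg hdc) _.
have Hrt : tgt r1 = src r2.
  move: Ht; rewrite F1 F2 src_cat tgt_cat /= (NT_tgt H) => /cat_cancel [].
  done.
have IHr := IH r1 r2 ltac:(move: Hn; rewrite F1 F2 !size_cat /=; lia) Hrt.
have /IHr {}IHr : forall a b c, List.In (CM a b) r1 -> List.In (CM b c) r2 ->
    dpf s a c <= A * dpf s a b + B * dpf s b c.
  move=> a' b' c' I1 I2; apply: Hp; rewrite ?F1 ?F2; apply: In_catr; right => //.
have Habc : dpf s a c <= A * dpf s a b + B * dpf s b c.
  by apply: Hp; rewrite ?F1 ?F2; apply: In_catr; left.
have Rg := region hs hgc hdc Hb Hg H.
have := E0 (src g1) (tgt g2).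
rewrite !rc_cat_CM.
have := le_mulA A1 (rc_ge0 g1 [::] [::] hb hgz dp0).
have := le_mulA B1 (rc_ge0 g2 [::] [::] hb hgz dp0).
move: Habc IHr Rg; set dab := dpf s a b; set dbc := dpf s b c.
set X1 := rc _ _ _ g1 _ _; set X2 := rc _ _ _ g2 _ _.
set Y1 := rc _ _ _ r1 _ _; set Y2 := rc _ _ _ r2 _ _.
have -> : A * (X1 + dab + Y1) = A * X1 + A * dab + A * Y1 by ring.
have -> : B * (X2 + dbc + Y2) = B * X2 + B * dbc + B * Y2 by ring.
lra.
Qed.

Lemma powRS1 (R : realType) (p w : R) : 0 < w -> powR w p = powR w (p - 1) * w.
Proof.
move=> w0.
have H : powR w ((p - 1) + 1) = powR w (p - 1) * powR w 1.
  by apply: powRD; apply/implyP => _; rewrite gt_eqF.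
by rewrite subrK in H; rewrite H powRr1 // ltW.
Qed.

Lemma powR_mul_pm1 (R : realType) (p w u : R) : 0 < p -> 0 < w -> 0 < u ->
  powR (w / u) (p - 1) * powR u p = powR w (p - 1) * u.
Proof.
move=> p0 w0 u0.
rewrite (powRS1 p u0) mulrA -powRM ?divr_ge0 ?ltW //.
by rewrite divfK // gt_eqF.
Qed.

Lemma powR_pm1 (R : realType) (p w : R) : 0 < p -> 0 < w -> powR w (p - 1) * w = powR w p.
Proof. by move=> p0 w0; rewrite (powRS1 p w0). Qed.

Unset Implicit Arguments.

Theorem corollary4p7 (R : realType) (Sigma : Type) (p : R)
  (s : Sigma -> Sigma -> R) (gamma delta : seq Sigma -> R) :
  1 <= p ->
  sane s ->
  is_quasimetric (fun a b : Sigma => powR (s a a - s a b) p^-1) ->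
  gap_CL gamma -> gap_CL delta ->
  (forall a b : Sigma,
     gamma [:: b] - gamma [:: a] <= powR (powR (s a a - s a b) p^-1) p /\
     s a a + delta [:: a] - s b b - delta [:: b]
       <= powR (powR (s a a - s a b) p^-1) p) ->
  let d := fun a b : Sigma => powR (s a a - s a b) p^-1 in
  let S := globalS s gamma delta in
  let alpha := fun x : seq Sigma => powR (gamma x) p^-1 in
  let beta := fun x : seq Sigma => powR (S x x + delta x) p^-1 in
  let D := lp_edit p d alpha beta in
  is_quasimetric D /\ (forall x y : seq Sigma, D x y = powR (S x x - S x y) p^-1).
Proof.
move=> p1 hs hq hgc hdc hcond d S alpha beta D.
have p0 : 0 < p by apply: lt_le_trans p1.
have hg : gap_penalty gamma by case: hgc.
have hd : gap_penalty delta by case: hdc.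
have dp0 : forall a b, 0 <= dpf s a b by move=> a b; rewrite /dpf subr_ge0; case: (hs a b).
have Hb : forall a b, s a a + delta [:: a] - s b b - delta [:: b] <= dpf s a b.
  by move=> a b; have [_ ] := hcond a b; rewrite powRK // (dp0 a b).
have Hg : forall a b, gamma [:: b] - gamma [:: a] <= dpf s a b.
  by move=> a b; have [ ] := hcond a b; rewrite powRK // (dp0 a b).
have DE : forall x y, D x y = powR (Ef s gamma delta x y) p^-1.
  move=> x y; rewrite /D /lp_edit /d /alpha /beta /S.
  by rewrite (D_formula (x:=x) (y:=y) p0 hs hg hd (leqnn (size x + size y))).
have DS : forall x y, D x y = powR (S x x - S x y) p^-1.
  by move=> x y; rewrite DE /Ef /S S_diag.
split => //.
have hb := bzf_gapfun hs hdc; have hgz := gz0_gapfun hg.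
have bpos : forall w, bzf s delta w <= 0 -> w = [::].
  by move=> w; apply: gz0_eq0; case: (bz_CL hs hdc).
have gpos : forall w, gz0 gamma w <= 0 -> w = [::] by move=> w; apply: gz0_eq0.
have Epowr : forall x y, powR (D x y) p = Ef s gamma delta x y.
  by move=> x y; rewrite DE powRK // Ef_ge0.
have [dnn dsep dtri] := hq.
split.
- by move=> x y; rewrite DE; apply: powR_ge0.
- move=> x y; split; last first.
    by move=> ->; rewrite DS subrr powR0p.
  case; rewrite !DE => /powR_eq0_eq0 Exy /powR_eq0_eq0 Eyx.
  have [c1 [S1 T1 H1]] := Eopt hs hg hdc (leqnn (size x + size y)).
  have [c2 [S2 T2 H2]] := Eopt hs hg hdc (leqnn (size y + size x)).
  rewrite Exy in H1; rewrite Eyx in H2.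
  have [_ _ Z1] := rc_zero hb hgz dp0 bpos gpos H1.
  have [_ _ Z2] := rc_zero hb hgz dp0 bpos gpos H2.
  have := allZ_Zrel Z1; have := allZ_Zrel Z2; rewrite S1 T1 S2 T2 => Zb Za.
  apply: (Zrel_eq _ Za Zb) => a b e1 e2.
  by apply/dsep; rewrite /dpf in e1 e2; rewrite e1 e2 powR0p.
- move=> x y z.
  have [c1 [S1 T1 H1]] := Eopt hs hg hdc (leqnn (size x + size y)).
  have [c2 [S2 T2 H2]] := Eopt hs hg hdc (leqnn (size y + size z)).
  have Ht : tgt c1 = src c2 by rewrite T1 S2.
  have ET : forall A B, 1 <= A -> 1 <= B ->
      (forall a b c, List.In (CM a b) c1 -> List.In (CM b c) c2 ->
         dpf s a c <= A * dpf s a b + B * dpf s b c) ->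
      Ef s gamma delta x z <= A * Ef s gamma delta x y + B * Ef s gamma delta y z.
    move=> A B A1 B1 Hp.
    have := Tri (n := (size c1 + size c2)%N) hs hgc hdc Hb Hg A1 B1 (leqnn _) Ht Hp.
    rewrite S1 T2 => /le_trans; apply.
    by apply: lerD; apply: ler_wpM2l => //; lra.
  have dpd : forall a b, dpf s a b = powR (d a b) p.
    by move=> a b; rewrite /d powRK // dp0.
  have dmono : forall a b c, d a c <= d b c + 0 -> dpf s a c <= dpf s b c.
    move=> a b c h; rewrite !dpd; apply: (ge0_ler_powR (ltW p0)); rewrite ?nnegrE ?powR_ge0 //.
    by rewrite addr0 in h.
  have dmono' : forall a b c, d a c <= d a b + 0 -> dpf s a c <= dpf s a b.
    move=> a b c h; rewrite !dpd; apply: (ge0_ler_powR (ltW p0)); rewrite ?nnegrE ?powR_ge0 //.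
    by rewrite addr0 in h.
  have pi0 : 0 <= p^-1 by rewrite invr_ge0 ltW.
  have [u0|u0] := eqVneq (D x y) 0.
    have Exy : Ef s gamma delta x y = 0 by rewrite -Epowr u0 powR0 // gt_eqF.
    rewrite Exy in H1; have [_ _ Z1] := rc_zero hb hgz dp0 bpos gpos H1.
    have Hp1 : forall a b c, List.In (CM a b) c1 -> List.In (CM b c) c2 ->
         dpf s a c <= 1 * dpf s a b + 1 * dpf s b c.
      move=> a b c I1 _; have e := allZ_In Z1 I1; rewrite e !mul1r add0r; apply: dmono.
      have dab : powR (s a a - s a b) p^-1 = 0 by rewrite /dpf in e; rewrite e powR0p.
      by rewrite /d; move: (dtri a b c) => /=; rewrite dab add0r addr0.
    have H := ET 1 1 (lexx _) (lexx _) Hp1.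
    rewrite u0 add0r !DE; apply: (ge0_ler_powR pi0); rewrite ?nnegrE ?Ef_ge0 //.
    by move: H; rewrite Exy mulr0 !mul1r add0r.
  have upos : 0 < D x y by rewrite lt_neqAle eq_sym u0 DE powR_ge0.
  have [v0|v0] := eqVneq (D y z) 0.
    have Eyz : Ef s gamma delta y z = 0 by rewrite -Epowr v0 powR0 // gt_eqF.
    rewrite Eyz in H2; have [_ _ Z2] := rc_zero hb hgz dp0 bpos gpos H2.
    have Hp1 : forall a b c, List.In (CM a b) c1 -> List.In (CM b c) c2 ->
         dpf s a c <= 1 * dpf s a b + 1 * dpf s b c.
      move=> a b c _ I2; have e := allZ_In Z2 I2; rewrite e !mul1r addr0; apply: dmono'.
      have dbc : powR (s b b - s b c) p^-1 = 0 by rewrite /dpf in e; rewrite e powR0p.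
      by rewrite /d; move: (dtri a b c) => /=; rewrite dbc addr0.
    have H := ET 1 1 (lexx _) (lexx _) Hp1.
    rewrite v0 addr0 !DE; apply: (ge0_ler_powR pi0); rewrite ?nnegrE ?Ef_ge0 //.
    by move: H; rewrite Eyz mulr0 !mul1r addr0.
  have vpos : 0 < D y z by rewrite lt_neqAle eq_sym v0 DE powR_ge0.
  set u := D x y in upos u0 *; set v := D y z in vpos v0 *.
  have uv0 : 0 < u + v by rewrite addr_gt0.
  have A1 : 1 <= powR ((u + v) / u) (p - 1).
    rewrite -[X in X <= _](powRr0 ((u + v) / u)); apply: ler_powR; last by lra.
    by rewrite ler_pdivlMr // mul1r lerDl ltW.
  have B1 : 1 <= powR ((u + v) / v) (p - 1).
    rewrite -[X in X <= _](powRr0 ((u + v) / v)); apply: ler_powR; last by lra.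
    by rewrite ler_pdivlMr // mul1r lerDr ltW.
  have Hp : forall a b c, List.In (CM a b) c1 -> List.In (CM b c) c2 ->
      dpf s a c <= powR ((u + v) / u) (p - 1) * dpf s a b + powR ((u + v) / v) (p - 1) * dpf s b c.
    move=> a b c _ _; rewrite !dpd.
    apply: le_trans (key p1 upos vpos (powR_ge0 _ _) (powR_ge0 _ _)).
    apply: (ge0_ler_powR (ltW p0)); rewrite ?nnegrE ?addr_ge0 ?powR_ge0 //.
    exact: (dtri a b c).
  have H := ET _ _ A1 B1 Hp.
  rewrite -!Epowr /u /v -/u -/v in H.
  rewrite !(mulrC (powR (_ / _) _)) in H.
  rewrite (mulrC (powR u p)) (mulrC (powR v p)) in H.
  rewrite (powR_mul_pm1 p0 uv0 upos) (powR_mul_pm1 p0 uv0 vpos) -mulrDr powR_pm1 // in H.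
  rewrite DE; have -> : u + v = powR (powR (u + v) p) p^-1.
    by rewrite -powRrM mulfV ?gt_eqF // powRr1 // ltW.
  rewrite Epowr in H; apply: (ge0_ler_powR pi0) => //; rewrite nnegrE ?powR_ge0 //; exact: Ef_ge0.
Qed.
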